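(* Let $\rho:\mathcal{F}\to[\Psi]^\omega$ be a partition regular function. Then $\rho$ is $P^+$ if and only if it is both $P^{\,|}$ and $P^-$.
   Context: Let $\Omega,\Psi$ be countably infinite sets and $\mathcal{F}\subseteq[\Omega]^\omega$ a nonempty family of infinite subsets of $\Omega$ with $A\setminus K\in\mathcal{F}$ for all $A\in\mathcal{F}$ and finite $K\subseteq\Omega$. A function $\rho:\mathcal{F}\to[\Psi]^\omega$ is partition regular if: (M) $E\subseteq F$ in $\mathcal{F}$ implies $\rho(E)\subseteq\rho(F)$; (R) for every $F\in\mathcal{F}$ and $A,B\subseteq\Psi$ with $\rho(F)=A\cup B$ there is $E\in\mathcal{F}$ with $\rho(E)\subseteq A$ or $\rho(E)\subseteq B$; (S) for every $F\in\mathcal{F}$ there is $E\subseteq F$, $E\in\mathcal{F}$, such that for every $a\in\rho(E)$ there is a finite $K\subseteq\Omega$ with $a\notin\rho(E\setminus K)$. $\mathcal{I}_\rho=\{S\subseteq\Psi:\forall F\in\mathcal{F}\ \rho(F)\not\subseteq S\}$ and $\mathcal{I}_\rho^+=\mathcal{P}(\Psi)\setminus\mathcal{I}_\rho$. For $F\in\mathcal{F}$ and $B\subseteq\Psi$ write $\rho(F)\subseteq^\rho B$ if there is a finite $K\subseteq\Omega$ with $\rho(F\setminus K)\subseteq B$ (a relation between $F$ and $B$). $\rho$ is $P^+$ if for every $\subseteq$-decreasing sequence $(A_n)_{n\in\omega}$ of sets in $\mathcal{I}_\rho^+$ there is $F\in\mathcal{F}$ with $\rho(F)\subseteq^\rho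 A_n$ for all $n$; $\rho$ is $P^-$ if the same holds for every such sequence additionally satisfying $A_n\setminus A_{n+1}\in\mathcal{I}_\rho$ for all $n$; $\rho$ is $P^{\,|}$ if the same holds for every such sequence additionally satisfying $A_n\setminus A_{n+1}\in\mathcal{I}_\rho^+$ for all $n$. *)

(* Defs.v *)
From Stdlib Require Import List.

Definition subset {T : Type} (A B : T -> Prop) : Prop := forall x, A x -> B x.

Definition setminus {T : Type} (A B : T -> Prop) : T -> Prop :=
  fun x => A x /\ ~ B x.

Definition is_finite {T : Type} (A : T -> Prop) : Prop :=
  exists l : list T, forall x, A x -> In x l.

Definition is_infinite {T : Type} (A : T -> Prop) : Prop := ~ is_finite A.

Definition countably_infinite (T : Type) : Prop :=
  exists (f : T -> nat) (g : nat -> T),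
    (forall x, g (f x) = x) /\ (forall n, f (g n) = n).

(* Standing assumptions on F and rho : F -> [Psi]^omega
   (rho is a total function on sets; only its values on F matter). *)
Definition standing {Omega Psi : Type}
  (F : (Omega -> Prop) -> Prop) (rho : (Omega -> Prop) -> (Psi -> Prop)) : Prop :=
  (exists A, F A) /\
  (forall A, F A -> is_infinite A) /\
  (forall A K, F A -> is_finite K -> F (setminus A K)) /\
  (forall A, F A -> is_infinite (rho A)).

Definition partition_regular {Omega Psi : Type}
  (F : (Omega -> Prop) -> Prop) (rho : (Omega -> Prop) -> (Psi -> Prop)) : Prop :=
  (forall E G, F E -> F G -> subset E G -> subset (rho E) (rho G)) /\
  (forall G (A B : Psi -> Prop), F G ->
     (forall y, rho G y <-> (A y \/ B y)) ->
     exists E, F E /\ (subset (rho E) A \/ subset (rho E) B)) /\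
  (forall G, F G -> exists E, F E /\ subset E G /\
     forall a, rho E a -> exists K, is_finite K /\ ~ rho (setminus E K) a).

Definition I_rho {Omega Psi : Type}
  (F : (Omega -> Prop) -> Prop) (rho : (Omega -> Prop) -> (Psi -> Prop))
  (S : Psi -> Prop) : Prop :=
  forall G, F G -> ~ subset (rho G) S.

Definition I_rho_plus {Omega Psi : Type}
  (F : (Omega -> Prop) -> Prop) (rho : (Omega -> Prop) -> (Psi -> Prop))
  (S : Psi -> Prop) : Prop := ~ I_rho F rho S.

Definition rho_subset {Omega Psi : Type}
  (rho : (Omega -> Prop) -> (Psi -> Prop)) (G : Omega -> Prop) (B : Psi -> Prop) : Prop :=
  exists K, is_finite K /\ subset (rho (setminus G K)) B.

Definition decreasing_positive {Omega Psi : Type}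
  (F : (Omega -> Prop) -> Prop) (rho : (Omega -> Prop) -> (Psi -> Prop))
  (A : nat -> Psi -> Prop) : Prop :=
  (forall n, subset (A (S n)) (A n)) /\ (forall n, I_rho_plus F rho (A n)).

Definition has_pseudo_int {Omega Psi : Type}
  (F : (Omega -> Prop) -> Prop) (rho : (Omega -> Prop) -> (Psi -> Prop))
  (A : nat -> Psi -> Prop) : Prop :=
  exists G, F G /\ forall n, rho_subset rho G (A n).

Definition P_plus {Omega Psi : Type}
  (F : (Omega -> Prop) -> Prop) (rho : (Omega -> Prop) -> (Psi -> Prop)) : Prop :=
  forall A : nat -> Psi -> Prop, decreasing_positive F rho A -> has_pseudo_int F rho A.

Definition P_minus {Omega Psi : Type}
  (F : (Omega -> Prop) -> Prop) (rho : (Omega -> Prop) -> (Psi -> Prop)) : Prop :=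
  forall A : nat -> Psi -> Prop, decreasing_positive F rho A ->
    (forall n, I_rho F rho (setminus (A n) (A (S n)))) -> has_pseudo_int F rho A.

Definition P_bar {Omega Psi : Type}
  (F : (Omega -> Prop) -> Prop) (rho : (Omega -> Prop) -> (Psi -> Prop)) : Prop :=
  forall A : nat -> Psi -> Prop, decreasing_positive F rho A ->
    (forall n, I_rho_plus F rho (setminus (A n) (A (S n)))) -> has_pseudo_int F rho A.

(* Main.v *)
Require Import Defs.
From Stdlib Require Import Classical ClassicalEpsilon Lia.

Lemma dec_le {Omega Psi : Type} (F : (Omega -> Prop) -> Prop) rho (A : nat -> Psi -> Prop) :
  decreasing_positive F rho A -> forall n m, n <= m -> subset (A m) (A n).
Proof.
  intros [Hd _] n m Hnm. induction Hnm.
  - intros x h; exact h.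
  - intros x h. apply IHHnm. apply Hd. exact h.
Qed.

Lemma plus_up {Omega Psi : Type} (F : (Omega -> Prop) -> Prop) rho (S S' : Psi -> Prop) :
  I_rho_plus F rho S -> subset S S' -> I_rho_plus F rho S'.
Proof.
  intros H Hs HI. apply H. intros G HG Hsub. apply (HI G HG).
  intros x h. apply Hs, Hsub, h.
Qed.

Theorem proposition3p1 (Omega Psi : Type)
  (F : (Omega -> Prop) -> Prop) (rho : (Omega -> Prop) -> (Psi -> Prop)) :
  countably_infinite Omega -> countably_infinite Psi ->
  standing F rho -> partition_regular F rho ->
  (P_plus F rho <-> (P_bar F rho /\ P_minus F rho)).
Proof.
  intros _ _ _ _. split.
  - intros HP. split; intros A HA _; apply HP, HA.
  - intros [HB HM] A HA.
    destruct (classic (forall N, exists m, N <= m /\ I_rho_plus F rho (setminus (A m) (A (S m))))) as [Hinf | Hfin].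
    + set (next := fun N => proj1_sig (constructive_indefinite_description _ (Hinf N))).
      assert (Hn : forall N, N <= next N /\ I_rho_plus F rho (setminus (A (next N)) (A (S (next N))))).
      { intro N. exact (proj2_sig (constructive_indefinite_description _ (Hinf N))). }
      set (m := fix m k := match k with 0 => next 0 | S k => next (S (m k)) end).
      assert (Hm : forall k, S (m k) <= m (S k)).
      { intro k. simpl. apply Hn. }
      assert (Hmk : forall k, k <= m k).
      { induction k. lia. specialize (Hm k). lia. }
      assert (HBd : decreasing_positive F rho (fun k => A (m k))).
      { split.
        - intro k. apply (dec_le F rho A HA). specialize (Hm k). lia.
        - intro k. apply HA. }
      destruct (HB (fun k => A (m k)) HBd) as [G [HG HGs]].
      { intro k. apply plus_up with (S := setminus (A (m k)) (A (S (m k)))).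
        - destruct k; simpl; apply Hn.
        - intros x [h1 h2]. split.
          + exact h1.
          + intro h3. apply h2. apply (dec_le F rho A HA (S (m k)) (m (S k)) (Hm k)). exact h3. }
      exists G. split; [exact HG|]. intro n.
      destruct (HGs n) as [K [HK Hs]]. exists K. split; [exact HK|].
      intros x h. apply (dec_le F rho A HA n (m n) (Hmk n)). apply Hs, h.
    + apply not_all_ex_not in Hfin. destruct Hfin as [N HN].
      assert (HI : forall k, I_rho F rho (setminus (A (N + k)) (A (S (N + k))))).
      { intro k. apply NNPP. intro Hc. apply HN. exists (N + k). split. lia. exact Hc. }
      assert (HBd : decreasing_positive F rho (fun k => A (N + k))).
      { split.
        - intro k. rewrite <- plus_n_Sm. apply HA.
        - intro k. apply HA. }
      destruct (HM (fun k => A (N + k)) HBd) as [G [HG HGs]].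
      { intro k. rewrite <- plus_n_Sm. apply HI. }
      exists G. split; [exact HG|]. intro n.
      destruct (HGs n) as [K [HK Hs]]. exists K. split; [exact HK|].
      intros x h. apply (dec_le F rho A HA n (N + n)). lia. apply Hs, h.
Qed.
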